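(* Define $f:\mathbb{R}\to\mathbb{R}$ by $f(x)=x$ if $x\in\{0\}\cup[1,\infty)$; $f(x)=2^{-n}$ if $x\in[3\cdot2^{-(n+2)},2^{-n})$, $n=0,1,2,\dots$; $f(x)=2x-2^{-(n+1)}$ if $x\in[2^{-(n+1)},3\cdot2^{-(n+2)})$, $n=0,1,2,\dots$; and $f(x)=f(-x)$ if $x<0$. Then $f(x)\ge f(0)+x^2$ for all $x\in[-1,1]$, so $\bar x=0$ is a strong local minimizer of $f$, while $\mathbb{R}\times\{0\}\subset T_{\operatorname{gph}\partial f}(0,0)$; in particular, for every $w\ne0$ one has $0\in D(\partial f)(0|0)(w)$, so there is no $w\neq 0$-uniform positivity: $\langle z,w\rangle=0$ for $z=0\in D(\partial f)(0|0)(w)$.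
   Context: $\partial f$ is the limiting subdifferential: $\partial f(\bar x)=\{v\mid (v,-1)\in N_{\operatorname{epi} f}(\bar x,f(\bar x))\}$ with $N$ the limiting normal cone. The tangent cone is $T_\Omega(\bar u)=\{v\mid \exists t_k\downarrow0,\ v_k\to v,\ \bar u+t_kv_k\in\Omega\}$ and $D(\partial f)(\bar x|\bar v)(w)=\{z\mid (w,z)\in T_{\operatorname{gph}\partial f}(\bar x,\bar v)\}$. $\bar x$ is a strong local minimizer if there are $\kappa,\gamma>0$ with $f(x)-f(\bar x)\ge\frac\kappa2|x-\bar x|^2$ for $|x-\bar x|\le\gamma$. *)

(* Defs.v *)
From Stdlib Require Import Reals Lra.
Open Scope R_scope.

(* The function of the example, specified by its defining equations.
   The pieces cover R and are pairwise disjoint, so exactly one function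
   satisfies this specification. *)
Definition f_spec (f : R -> R) : Prop :=
  f 0 = 0 /\
  (forall x, 1 <= x -> f x = x) /\
  (forall (n : nat) x, 3 * / 2 ^ (n + 2) <= x < / 2 ^ n -> f x = / 2 ^ n) /\
  (forall (n : nat) x, / 2 ^ (n + 1) <= x < 3 * / 2 ^ (n + 2) ->
      f x = 2 * x - / 2 ^ (n + 1)) /\
  (forall x, x < 0 -> f x = f (- x)).

Definition inner2 (u v : R * R) : R := fst u * fst v + snd u * snd v.
Definition norm2 (u : R * R) : R := sqrt (fst u ^ 2 + snd u ^ 2).
Definition sub2 (u v : R * R) : R * R := (fst u - fst v, snd u - snd v).

Definition cv2 (s : nat -> R * R) (l : R * R) : Prop :=
  Un_cv (fun k => fst (s k)) (fst l) /\ Un_cv (fun k => snd (s k)) (snd l).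

Definition regular_normal (Om : R * R -> Prop) (u v : R * R) : Prop :=
  forall eps, 0 < eps -> exists delta, 0 < delta /\
    forall u', Om u' -> norm2 (sub2 u' u) < delta ->
      inner2 v (sub2 u' u) <= eps * norm2 (sub2 u' u).

Definition limiting_normal (Om : R * R -> Prop) (u v : R * R) : Prop :=
  exists (us vs : nat -> R * R),
    (forall k, Om (us k)) /\ cv2 us u /\ cv2 vs v /\
    (forall k, regular_normal Om (us k) (vs k)).

Definition epi (f : R -> R) : R * R -> Prop := fun p => f (fst p) <= snd p.

Definition subdiff (f : R -> R) (x v : R) : Prop :=
  limiting_normal (epi f) (x, f x) (v, -1).

Definition gph_subdiff (f : R -> R) : R * R -> Prop :=
  fun p => subdiff f (fst p) (snd p).

Definition tangent_cone (Om : R * R -> Prop) (u v : R * R) : Prop :=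
  exists (t : nat -> R) (vs : nat -> R * R),
    (forall k, 0 < t k) /\ Un_cv t 0 /\ cv2 vs v /\
    (forall k, Om (fst u + t k * fst (vs k), snd u + t k * snd (vs k))).

Definition D_subdiff (f : R -> R) (x v w z : R) : Prop :=
  tangent_cone (gph_subdiff f) (x, v) (w, z).

Definition strong_local_minimizer (f : R -> R) (xb : R) : Prop :=
  exists kappa gamma, 0 < kappa /\ 0 < gamma /\
    forall x, Rabs (x - xb) <= gamma -> f x - f xb >= kappa / 2 * (x - xb) ^ 2.

(* Main.v *)
Require Import Defs.
From Stdlib Require Import Reals Lra Lia.
Open Scope R_scope.

Lemma pow2_pos n : 0 < 2 ^ n.
Proof. apply pow_lt; lra. Qed.

Lemma pow2_ge n : INR n + 1 <= 2 ^ n.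
Proof.
  induction n as [|n IH]; [simpl; lra|]. rewrite S_INR; simpl.
  assert (1 <= 2 ^ n) by (apply pow_R1_Rle; lra). lra.
Qed.

Lemma small_pow x : 0 < x -> exists N, / 2 ^ N <= x.
Proof.
  intros Hx. destruct (archimed_cor1 x Hx) as [N [H1 H2]].
  exists N. assert (0 < INR N) by (apply lt_0_INR; lia).
  assert (/ 2 ^ N <= / INR N).
  { apply Rinv_le_contravar; auto. pose proof (pow2_ge N); lra. }
  lra.
Qed.

Lemma segment N : forall x, / 2 ^ N <= x < 1 -> exists n, / 2 ^ (n + 1) <= x < / 2 ^ n.
Proof.
  induction N as [|N IH]; intros x Hx.
  - simpl in Hx. rewrite Rinv_1 in Hx. lra.
  - destruct (Rle_lt_dec (/ 2 ^ N) x) as [H|H].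
    + apply IH; lra.
    + exists N. rewrite Nat.add_1_r. lra.
Qed.

Lemma f_ge_x f (Hf : f_spec f) x : 0 < x < 1 -> f x >= x.
Proof.
  destruct Hf as [H0 [H1 [H2 [H3 H4]]]]. intros Hx.
  destruct (small_pow x) as [N HN]; [lra|].
  destruct (segment N x) as [n Hn]; [lra|].
  destruct (Rle_lt_dec (3 * / 2 ^ (n + 2)) x) as [H|H].
  - rewrite (H2 n x); lra.
  - rewrite (H3 n x); lra.
Qed.

Lemma part1 f (Hf : f_spec f) : forall x, -1 <= x <= 1 -> f x >= f 0 + x ^ 2.
Proof.
  pose proof Hf as Hf'.
  destruct Hf as [H0 [H1 [H2 [H3 H4]]]]. rewrite H0.
  assert (P : forall x, 0 < x <= 1 -> f x >= x ^ 2).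
  { intros x Hx. destruct (Req_dec x 1) as [E|E].
    - subst. rewrite H1; lra.
    - pose proof (f_ge_x f Hf' x ltac:(lra)). nra. }
  intros x Hx. destruct (Rtotal_order x 0) as [L|[E|G]].
  - rewrite H4 by lra. pose proof (P (-x) ltac:(lra)). nra.
  - subst. rewrite H0. lra.
  - pose proof (P x ltac:(lra)). lra.
Qed.

Lemma f_nonneg f (Hf : f_spec f) : forall x, 0 <= f x.
Proof.
  pose proof (part1 f Hf) as P.
  destruct Hf as [H0 [H1 [H2 [H3 H4]]]].
  assert (Q : forall x, 0 <= x -> 0 <= f x).
  { intros x Hx. destruct (Rle_lt_dec 1 x).
    - rewrite H1; lra.
    - pose proof (P x ltac:(lra)). rewrite H0 in H. nra. }
  intros x. destruct (Rle_lt_dec 0 x); auto. rewrite H4 by lra. apply Q; lra.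
Qed.

Lemma norm2_ge a b : Rabs a <= norm2 (a, b).
Proof.
  unfold norm2; simpl. rewrite <- sqrt_Rsqr_abs. apply sqrt_le_1_alt.
  unfold Rsqr. nra.
Qed.

Lemma cv_const (c : R) : Un_cv (fun _ => c) c.
Proof.
  intros eps He. exists 0%nat. intros. unfold R_dist. rewrite Rminus_diag, Rabs_R0. lra.
Qed.

Lemma sub_of_local f x d : 0 < d ->
  (forall y r, Rabs (y - x) < d -> f y <= r -> f x <= r) -> subdiff f x 0.
Proof.
  intros Hd H. unfold subdiff, limiting_normal.
  exists (fun _ => (x, f x)), (fun _ => (0, -1)).
  split; [intros; unfold epi; simpl; lra|].
  split; [split; apply cv_const|].
  split; [split; apply cv_const|].
  intros k eps He. exists d. split; auto.
  intros [y r] Hy Hn. unfold epi in Hy; simpl in Hy.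
  unfold inner2, sub2 in *; simpl in *.
  pose proof (norm2_ge (y - x) (r - f x)).
  assert (0 <= norm2 (y - x, r - f x)) by (unfold norm2; apply sqrt_pos).
  assert (f x <= r) by (apply (H y r); lra).
  nra.
Qed.

Lemma flat f (Hf : f_spec f) k x : Rabs x = 7 / 8 / 2 ^ k -> subdiff f x 0.
Proof.
  destruct Hf as [H0 [H1 [H2 [H3 H4]]]].
  intros Hx. pose proof (pow2_pos k) as Pk.
  assert (E2 : 2 ^ (k + 2) = 2 ^ k * 4) by (rewrite pow_add; simpl; ring).
  assert (Pos : forall y, 0 < y -> Rabs (y - 7/8/2^k) < 1/8/2^k -> f y = / 2 ^ k).
  { intros y Hy Hyd. apply (H2 k y). rewrite E2.
    apply Rabs_def2 in Hyd. destruct Hyd as [A B].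
    rewrite Rinv_mult. unfold Rdiv in *.
    set (a := / 2 ^ k) in *. lra. }
  assert (Sym : forall y, Rabs (Rabs y - 7/8/2^k) < 1/8/2^k -> f y = / 2 ^ k).
  { intros y Hy. assert (0 < 1/8/2^k) by (unfold Rdiv; apply Rmult_lt_0_compat; [lra|apply Rinv_0_lt_compat; auto]).
    assert (0 < 7/8/2^k) by (unfold Rdiv; apply Rmult_lt_0_compat; [lra|apply Rinv_0_lt_compat; auto]).
    destruct (Rle_lt_dec 0 y).
    - rewrite (Rabs_right y) in Hy by lra. apply Pos; auto.
      apply Rabs_def2 in Hy. lra.
    - rewrite (Rabs_left y) in Hy by lra. rewrite H4 by lra. apply Pos; auto.
      apply Rabs_def2 in Hy. lra. }
  apply (sub_of_local f x (1/8/2^k)).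
  - unfold Rdiv; apply Rmult_lt_0_compat; [lra|apply Rinv_0_lt_compat; auto].
  - intros y r Hy Hr. rewrite (Sym x) by (rewrite Hx, Rminus_diag, Rabs_R0;
      unfold Rdiv; apply Rmult_lt_0_compat; [lra|apply Rinv_0_lt_compat; auto]).
    rewrite <- (Sym y); auto.
    rewrite <- Hx. eapply Rle_lt_trans; [apply Rabs_triang_inv2|]. auto.
Qed.

Lemma tangent f (Hf : f_spec f) w : tangent_cone (gph_subdiff f) (0, 0) (w, 0).
Proof.
  destruct (Req_dec w 0) as [E|E].
  - subst. exists (fun k => 1 / 2 ^ k), (fun _ => (0, 0)).
    split; [intros; pose proof (pow2_pos k); unfold Rdiv; apply Rmult_lt_0_compat;
      [lra|apply Rinv_0_lt_compat; auto]|].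
    split; [apply cv_pow_half|].
    split; [split; apply cv_const|].
    intros k; simpl. unfold gph_subdiff; simpl.
    replace (0 + 1 / 2 ^ k * 0) with 0 by ring.
    pose proof (f_nonneg f Hf) as Nn. destruct Hf as [H0 _].
    unfold subdiff, limiting_normal.
    exists (fun _ => (0, f 0)), (fun _ => (0, -1)).
    split; [intros; unfold epi; simpl; lra|].
    split; [split; apply cv_const|].
    split; [split; apply cv_const|].
    intros j eps He. exists 1. split; [lra|].
    intros [y r] Hy Hn. unfold epi in Hy; simpl in Hy.
    unfold inner2, sub2 in *; simpl in *.
    assert (0 <= norm2 (y - 0, r - f 0)) by (unfold norm2; apply sqrt_pos).
    pose proof (Nn y). rewrite H0 in *. nra.
  - assert (Aw : 0 < Rabs w) by (apply Rabs_pos_lt; auto).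
    exists (fun k => (7/8/Rabs w) / 2 ^ k), (fun _ => (w, 0)).
    split; [intros; pose proof (pow2_pos k); unfold Rdiv; repeat apply Rmult_lt_0_compat;
      try lra; apply Rinv_0_lt_compat; auto|].
    split; [apply cv_pow_half|].
    split; [split; apply cv_const|].
    intros k; simpl. unfold gph_subdiff; simpl.
    replace (0 + 7 / 8 / Rabs w / 2 ^ k * 0) with 0 by ring.
    apply (flat f Hf k). pose proof (pow2_pos k).
    rewrite Rplus_0_l, Rabs_mult, (Rabs_right (7 / 8 / Rabs w / 2 ^ k)).
    + field. split; lra.
    + apply Rle_ge. unfold Rdiv. repeat apply Rmult_le_pos; try lra;
      left; apply Rinv_0_lt_compat; auto.
Qed.

Theorem mainTheorem4 (f : R -> R) (Hf : f_spec f) :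
  (forall x, -1 <= x <= 1 -> f x >= f 0 + x ^ 2) /\
  strong_local_minimizer f 0 /\
  (forall w, tangent_cone (gph_subdiff f) (0, 0) (w, 0)) /\
  (forall w, w <> 0 -> D_subdiff f 0 0 w 0 /\
     exists z, D_subdiff f 0 0 w z /\ z * w = 0).
Proof.
  pose proof (part1 f Hf) as P.
  split; [exact P|].
  split.
  - exists 2, 1. split; [lra|]. split; [lra|].
    intros x Hx. rewrite Rminus_0_r in *. assert (Hx2 : -1 <= x <= 1) by (unfold Rabs in Hx; destruct (Rcase_abs x); lra). clear Hx. rename Hx2 into Hx.
    pose proof (P x Hx). lra.
  - split.
    + intros w. exact (tangent f Hf w).
    + intros w _. split; [exact (tangent f Hf w)|].
      exists 0. split; [exact (tangent f Hf w)|ring].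
Qed.
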